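(* Let $L$ be a linear continuum with endpoints, let $(f_i:i\in I)$ be an indiscernible sequence of single elements of $M_L$ of length at least $3$, let $i<j$ be elements of $I$, and let $(a,b)\in\mathrm{im}(f_i,f_j)$. Then either $(a,a)\in\mathrm{im}(f_i,f_j)$ or $(b,b)\in\mathrm{im}(f_i,f_j)$.
   Context: A linear continuum is a dense linear order with the least upper bound property; with endpoints means it has a least and greatest element. $M_L$ is the set of functions $f:L\to[0,1]$ that are nondecreasing, continuous in the order topology, with $\inf f=0$ and $\sup f=1$, with the sup metric, regarded as a metric structure in the language of binary predicates $\varphi_\alpha$ ($\alpha\in\mathbb{Q}\cap[0,1]$), where $\varphi_\alpha(f,g)=f(t)$ for any $t\in L$ with $f(t)+g(t)=\alpha$. $\mathrm{im}(f,g)=\{(f(t),g(t)):t\in L\}$. A sequence is indiscernible if every formula takes the same value on all increasing tuples from it. *)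

(* Defs.v *)
From Stdlib Require Import Reals QArith ClassicalEpsilon.
Open Scope R_scope.

Section Orders.
Variables (L : Type) (lt : L -> L -> Prop).

Definition le (x y : L) : Prop := lt x y \/ x = y.

Record StrictLinearOrder : Prop := {
  slo_irrefl : forall x, ~ lt x x;
  slo_trans  : forall x y z, lt x y -> lt y z -> lt x z;
  slo_total  : forall x y, lt x y \/ x = y \/ lt y x
}.

Record LinearContinuumWithEndpoints : Prop := {
  lc_order : StrictLinearOrder;
  lc_dense : forall x y, lt x y -> exists z, lt x z /\ lt z y;
  lc_lub   : forall S : L -> Prop, (exists x, S x) ->
               (exists u, forall x, S x -> le x u) ->
               exists s, (forall x, S x -> le x s) /\
                         (forall u, (forall x, S x -> le x u) -> le s u);
  lc_min   : exists m, forall x, le m x;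
  lc_max   : exists M, forall x, le x M
}.

(* Continuity for the order topology: at every point t, for every eps > 0
   there is a basic open interval (lo, hi) containing t (lo = None means no
   lower bound, hi = None means no upper bound) on which f stays eps-close
   to f t. *)
Definition below_opt (lo : option L) (s : L) : Prop :=
  match lo with None => True | Some a => lt a s end.
Definition above_opt (hi : option L) (s : L) : Prop :=
  match hi with None => True | Some b => lt s b end.

Definition order_continuous (f : L -> R) : Prop :=
  forall t eps, 0 < eps ->
    exists lo hi, below_opt lo t /\ above_opt hi t /\
      forall s, below_opt lo s -> above_opt hi s -> Rabs (f s - f t) < eps.

(* real supremum of a set of reals (0 if empty or unbounded) *)
Definition Rsup (E : R -> Prop) : R :=
  match excluded_middle_informative (bound E /\ exists x, E x) with
  | left h => proj1_sig (completeness E (proj1 h) (proj2 h))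
  | right _ => 0
  end.
Definition Rinf (E : R -> Prop) : R := - Rsup (fun r => E (- r)).

Definition inML (f : L -> R) : Prop :=
  (forall t, 0 <= f t <= 1) /\
  (forall s t, le s t -> f s <= f t) /\
  order_continuous f /\
  Rinf (fun r => exists t, r = f t) = 0 /\
  Rsup (fun r => exists t, r = f t) = 1.

Definition ML : Type := { f : L -> R | inML f }.

Definition dist (f g : ML) : R :=
  Rsup (fun r => exists t, r = Rabs (proj1_sig f t - proj1_sig g t)).

(* phi_alpha(f,g) = f(t) for any t with f(t)+g(t) = alpha (all such t give
   the same value; we take the supremum of these values) *)
Definition phiA (alpha : R) (f g : ML) : R :=
  Rsup (fun r => exists t, proj1_sig f t + proj1_sig g t = alpha /\
                           r = proj1_sig f t).

Definition im (f g : ML) (p : R * R) : Prop :=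
  exists t, proj1_sig f t = fst p /\ proj1_sig g t = snd p.

End Orders.

Arguments ML {L} lt.

(* Connectives: the standard full system 0, 1, ¬x = 1-x, x/2, x ∸ y,
   plus quantifiers sup and inf. Variables are natural numbers. *)
Inductive formula : Type :=
| FDist  (i j : nat)
| FPhi   (a : Q) (Ha : (0 <= a /\ a <= 1)%Q) (i j : nat)
| FZero
| FOne
| FNeg   (p : formula)
| FHalf  (p : formula)
| FMinus (p q : formula)
| FSup   (i : nat) (p : formula)
| FInf   (i : nat) (p : formula).

Fixpoint free_in (k : nat) (p : formula) : Prop :=
  match p with
  | FDist i j => k = i \/ k = j
  | FPhi _ _ i j => k = i \/ k = j
  | FZero | FOne => False
  | FNeg p | FHalf p => free_in k p
  | FMinus p q => free_in k p \/ free_in k q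
  | FSup i p | FInf i p => k <> i /\ free_in k p
  end.

Definition fv_below (n : nat) (p : formula) : Prop :=
  forall k, free_in k p -> (k < n)%nat.

Section Semantics.
Variables (L : Type) (lt : L -> L -> Prop).

Definition upd (e : nat -> ML lt) (i : nat) (g : ML lt) : nat -> ML lt :=
  fun k => if Nat.eqb k i then g else e k.

Fixpoint eval (e : nat -> ML lt) (p : formula) : R :=
  match p with
  | FDist i j => dist L lt (e i) (e j)
  | FPhi a _ i j => phiA L lt (Q2R a) (e i) (e j)
  | FZero => 0
  | FOne => 1
  | FNeg p => 1 - eval e p
  | FHalf p => eval e p / 2
  | FMinus p q => Rmax 0 (eval e p - eval e q)
  | FSup i p => Rsup (fun r => exists g, r = eval (upd e i g) p)
  | FInf i p => Rinf (fun r => exists g, r = eval (upd e i g) p)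
  end.

Definition increasing_on {I : Type} (ltI : I -> I -> Prop) (n : nat)
  (s : nat -> I) : Prop :=
  forall a b, (a < b)%nat -> (b < n)%nat -> ltI (s a) (s b).

Definition indiscernible {I : Type} (ltI : I -> I -> Prop)
  (f : I -> ML lt) : Prop :=
  forall (p : formula) (n : nat), fv_below n p ->
  forall s s' : nat -> I, increasing_on ltI n s -> increasing_on ltI n s' ->
    eval (fun k => f (s k)) p = eval (fun k => f (s' k)) p.

End Semantics.

(* Main.v *)
Require Import Defs.
From Stdlib Require Import Reals QArith Qreals Lra Lia ClassicalEpsilon Classical FunctionalExtensionality PropExtensionality.
Open Scope R_scope.

Lemma Rsup_spec (E : R -> Prop) : bound E -> (exists x, E x) -> is_lub E (Rsup E).
Proof.
  intros Hb Hn. unfold Rsup.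
  destruct (excluded_middle_informative (bound E /\ exists x, E x)) as [h|h].
  - destruct (completeness E (proj1 h) (proj2 h)) as [m Hm]. exact Hm.
  - exfalso; tauto.
Qed.

Lemma Rsup_max (E : R -> Prop) m : E m -> (forall x, E x -> x <= m) -> Rsup E = m.
Proof.
  intros Hm Hub. assert (Hb : bound E) by (exists m; exact Hub).
  destruct (Rsup_spec E Hb (ex_intro _ m Hm)) as [H1 H2].
  apply Rle_antisym. apply H2. exact Hub. apply H1. exact Hm.
Qed.

Lemma Rsup_ub (E : R -> Prop) x : bound E -> E x -> x <= Rsup E.
Proof. intros Hb Hx. destruct (Rsup_spec E Hb (ex_intro _ x Hx)) as [H1 _]. apply H1; exact Hx. Qed.

Lemma Rsup_le (E : R -> Prop) u : (exists x, E x) -> (forall x, E x -> x <= u) -> Rsup E <= u.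
Proof.
  intros Hn Hu. assert (Hb : bound E) by (exists u; exact Hu).
  destruct (Rsup_spec E Hb Hn) as [_ H2]. apply H2. exact Hu.
Qed.

Lemma Rmax0_lip x y : Rabs (Rmax 0 x - Rmax 0 y) <= Rabs (x - y).
Proof. unfold Rmax, Rabs; repeat destruct Rle_dec; repeat destruct Rcase_abs; lra. Qed.

Lemma Rmax0_mono x y : x <= y -> Rmax 0 x <= Rmax 0 y.
Proof. unfold Rmax; repeat destruct Rle_dec; lra. Qed.

Lemma Rmax0_ge x : 0 <= Rmax 0 x.
Proof. unfold Rmax; destruct Rle_dec; lra. Qed.

Lemma Rmax0_pos x : 0 <= x -> Rmax 0 x = x.
Proof. unfold Rmax; destruct Rle_dec; lra. Qed.

Lemma Rmax0_neg x : x <= 0 -> Rmax 0 x = 0.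
Proof. unfold Rmax; destruct Rle_dec; lra. Qed.

Section Ord.
Variables (L : Type) (lt : L -> L -> Prop) (HL : LinearContinuumWithEndpoints L lt).
Notation leL := (le L lt).

Let SO := lc_order L lt HL.

Lemma lt_irr x : ~ lt x x. Proof. exact (slo_irrefl _ _ SO x). Qed.
Lemma lt_tr x y z : lt x y -> lt y z -> lt x z. Proof. exact (slo_trans _ _ SO x y z). Qed.
Lemma lt_tot x y : lt x y \/ x = y \/ lt y x. Proof. exact (slo_total _ _ SO x y). Qed.

Lemma le_refl x : leL x x. Proof. right; reflexivity. Qed.
Lemma le_tr x y z : leL x y -> leL y z -> leL x z.
Proof. unfold le; intros [H|H] [H'|H']; subst; eauto using lt_tr. Qed.
Lemma le_lt_tr x y z : leL x y -> lt y z -> lt x z.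
Proof. unfold le; intros [H|H] H'; subst; eauto using lt_tr. Qed.
Lemma lt_le_tr x y z : lt x y -> leL y z -> lt x z.
Proof. unfold le; intros H [H'|H']; subst; eauto using lt_tr. Qed.
Lemma le_or_lt x y : leL x y \/ lt y x.
Proof. unfold le. destruct (lt_tot x y) as [H|[H|H]]; auto. Qed.
Lemma lt_not_le x y : lt x y -> ~ leL y x.
Proof. intros H H'. apply (lt_irr x). eapply lt_le_tr; eauto. Qed.

Definition mono (F : L -> R) := forall s t, leL s t -> F s <= F t.

Definition omax (a b : option L) : option L :=
  match a, b with
  | None, x => x
  | x, None => x
  | Some a, Some b => if excluded_middle_informative (lt a b) then Some b else Some a
  end.
Definition omin (a b : option L) : option L :=
  match a, b with
  | None, x => x
  | x, None => x
  | Some a, Some b => if excluded_middle_informative (lt a b) then Some a else Some b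
  end.

Lemma omax_spec a b s : below_opt L lt (omax a b) s <-> below_opt L lt a s /\ below_opt L lt b s.
Proof.
  destruct a as [a|], b as [b|]; simpl; try tauto.
  destruct (excluded_middle_informative (lt a b)) as [h|h]; simpl; split.
  - intros H; split; eauto using lt_tr.
  - tauto.
  - intros H; split; auto. destruct (lt_tot a b) as [H1|[H1|H1]]; [tauto|subst; auto|eauto using lt_tr].
  - tauto.
Qed.

Lemma omin_spec a b s : above_opt L lt (omin a b) s <-> above_opt L lt a s /\ above_opt L lt b s.
Proof.
  destruct a as [a|], b as [b|]; simpl; try tauto.
  destruct (excluded_middle_informative (lt a b)) as [h|h]; simpl; split.
  - intros H; split; eauto using lt_tr.
  - tauto.
  - intros H; split; auto. destruct (lt_tot a b) as [H1|[H1|H1]]; [tauto|subst; auto|eauto using lt_tr].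
  - tauto.
Qed.

Lemma oc_lip (F G H : L -> R) K : 0 < K ->
  (forall s t, Rabs (H s - H t) <= K * (Rabs (F s - F t) + Rabs (G s - G t))) ->
  order_continuous L lt F -> order_continuous L lt G -> order_continuous L lt H.
Proof.
  intros HK Hl HF HG t eps Heps.
  assert (He : 0 < eps / (2 * K)) by (apply Rdiv_lt_0_compat; lra).
  destruct (HF t _ He) as [lo1 [hi1 [A1 [B1 C1]]]].
  destruct (HG t _ He) as [lo2 [hi2 [A2 [B2 C2]]]].
  exists (omax lo1 lo2), (omin hi1 hi2).
  split; [apply omax_spec; tauto|]. split; [apply omin_spec; tauto|].
  intros s Hs1 Hs2. apply omax_spec in Hs1. apply omin_spec in Hs2.
  specialize (C1 s (proj1 Hs1) (proj1 Hs2)). specialize (C2 s (proj2 Hs1) (proj2 Hs2)).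
  eapply Rle_lt_trans. apply Hl.
  apply Rlt_le_trans with (K * (eps / (2*K) + eps / (2*K))).
  apply Rmult_lt_compat_l; lra. right; field; lra.
Qed.

Lemma ivt (F : L -> R) t1 t2 v : mono F -> order_continuous L lt F -> leL t1 t2 ->
  F t1 <= v -> v <= F t2 -> exists t, F t = v /\ leL t1 t /\ leL t t2.
Proof.
  intros Hm Hc H12 Hv1 Hv2.
  set (S := fun x => leL t1 x /\ leL x t2 /\ F x <= v).
  destruct (lc_lub L lt HL S) as [s [Hs1 Hs2]].
  { exists t1. split; [apply le_refl|]. split; auto. }
  { exists t2. intros x Hx. apply Hx. }
  assert (Ht1s : leL t1 s) by (apply Hs1; split; [apply le_refl|split; auto]).
  assert (Hst2 : leL s t2) by (apply Hs2; intros x Hx; apply Hx).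
  destruct (total_order_T (F s) v) as [[Hlt|Heq]|Hgt].
  - exfalso.
    destruct (Hc s (v - F s)) as [lo [hi [A [B C]]]]; [lra|].
    assert (Hst : lt s t2).
    { destruct Hst2 as [H|H]; auto. subst. lra. }
    assert (Hb : above_opt L lt (omin hi (Some t2)) s) by (apply omin_spec; simpl; auto).
    destruct (omin hi (Some t2)) as [c|] eqn:Ec.
    2:{ destruct hi; simpl in Ec; try discriminate.
        destruct (excluded_middle_informative _); discriminate. }
    simpl in Hb. destruct (lc_dense L lt HL s c Hb) as [x [Hx1 Hx2]].
    assert (Hx : above_opt L lt (omin hi (Some t2)) x) by (rewrite Ec; exact Hx2).
    apply omin_spec in Hx. destruct Hx as [Hx3 Hx4]. simpl in Hx4.
    assert (Hlo : below_opt L lt lo x).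
    { destruct lo; simpl in *; auto. eapply lt_tr; eauto. }
    specialize (C x Hlo Hx3).
    assert (HxS : S x).
    { split. left. eapply le_lt_tr; eauto. split. left; auto.
      apply Rabs_def2 in C. lra. }
    apply (lt_not_le _ _ Hx1). apply Hs1. exact HxS.
  - exists s. auto.
  - exfalso.
    destruct (Hc s (F s - v)) as [lo [hi [A [B C]]]]; [lra|].
    assert (Hts : lt t1 s).
    { destruct Ht1s as [H|H]; auto. subst. lra. }
    assert (Hb : below_opt L lt (omax lo (Some t1)) s) by (apply omax_spec; simpl; auto).
    destruct (omax lo (Some t1)) as [c|] eqn:Ec.
    2:{ destruct lo; simpl in Ec; try discriminate.
        destruct (excluded_middle_informative _); discriminate. }
    simpl in Hb. destruct (lc_dense L lt HL c s Hb) as [x [Hx1 Hx2]].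
    assert (Hx : below_opt L lt (omax lo (Some t1)) x) by (rewrite Ec; exact Hx1).
    apply omax_spec in Hx. destruct Hx as [Hx3 Hx4]. simpl in Hx4.
    assert (Hhi : above_opt L lt hi x).
    { destruct hi; simpl in *; auto. eapply lt_tr; eauto. }
    specialize (C x Hx3 Hhi). apply Rabs_def2 in C.
    assert (Hub : forall y, S y -> leL y x).
    { intros y [Hy1 [Hy2 Hy3]]. destruct (le_or_lt y x) as [H|H]; auto.
      exfalso. assert (F x <= F y) by (apply Hm; left; auto). lra. }
    apply (lt_not_le _ _ Hx2). apply Hs2. exact Hub.
Qed.

Lemma fiber_min (F : L -> R) a : mono F -> order_continuous L lt F ->
  (exists t, F t = a) -> exists t0, F t0 = a /\ forall t, F t = a -> leL t0 t.
Proof.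
  intros Hm Hc [ta Hta].
  set (B := fun x => forall t, F t = a -> leL x t).
  destruct (lc_lub L lt HL B) as [t0 [H1 H2]].
  { destruct (lc_min L lt HL) as [m Hm']. exists m. intros t _. apply Hm'. }
  { exists ta. intros x Hx. apply Hx. exact Hta. }
  assert (Hlb : forall t, F t = a -> leL t0 t) by (intros t Ht; apply H2; intros x Hx; apply Hx; exact Ht).
  exists t0. split; auto.
  assert (Hle : F t0 <= a) by (rewrite <- Hta; apply Hm; apply Hlb; auto).
  destruct (Rle_lt_or_eq_dec _ _ Hle) as [Hlt|]; auto. exfalso.
  destruct (Hc t0 (a - F t0)) as [lo [hi [A [B' C]]]]; [lra|].
  assert (Hnear : forall t, F t = a -> above_opt L lt hi t -> False).
  { intros t Ht Hh. assert (Hlo : below_opt L lt lo t).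
    { destruct lo; simpl in *; auto. eapply lt_le_tr; eauto. }
    specialize (C t Hlo Hh). apply Rabs_def2 in C. lra. }
  destruct hi as [h|].
  - simpl in B'. assert (Hh : B h).
    { intros t Ht. destruct (le_or_lt h t) as [H|H]; auto. exfalso. apply (Hnear t Ht H). }
    apply (lt_not_le _ _ B'). apply H1. exact Hh.
  - apply (Hnear ta Hta). simpl; auto.
Qed.

End Ord.

Section ML.
Variables (L : Type) (lt : L -> L -> Prop) (HL : LinearContinuumWithEndpoints L lt).
Notation leL := (le L lt).

Lemma rinf_range (u : L -> R) m : mono L lt u -> (forall x, leL m x) ->
  Rinf (fun r => exists t, r = u t) = u m.
Proof.
  intros Hm Hmin. unfold Rinf.
  rewrite (Rsup_max _ (- u m)). lra.
  - exists m. lra.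
  - intros x [t Ht]. assert (u m <= u t) by (apply Hm; apply Hmin). lra.
Qed.

Lemma rsup_range (u : L -> R) M : mono L lt u -> (forall x, leL x M) ->
  Rsup (fun r => exists t, r = u t) = u M.
Proof.
  intros Hm HM. apply Rsup_max. exists M; auto.
  intros x [t Ht]; subst; apply Hm; apply HM.
Qed.

Section F.
Variable F : ML lt.
Let u := proj1_sig F.
Lemma ML_range t : 0 <= u t <= 1. Proof. exact (proj1 (proj2_sig F) t). Qed.
Lemma ML_mono : mono L lt u. Proof. exact (proj1 (proj2 (proj2_sig F))). Qed.
Lemma ML_oc : order_continuous L lt u. Proof. exact (proj1 (proj2 (proj2 (proj2_sig F)))). Qed.
Lemma ML_min m : (forall x, leL m x) -> u m = 0.
Proof.
  intros Hm. rewrite <- (rinf_range u m ML_mono Hm).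
  exact (proj1 (proj2 (proj2 (proj2 (proj2_sig F))))).
Qed.
Lemma ML_max M : (forall x, leL x M) -> u M = 1.
Proof.
  intros HM. rewrite <- (rsup_range u M ML_mono HM).
  exact (proj2 (proj2 (proj2 (proj2 (proj2_sig F))))).
Qed.
End F.

Section FG.
Variables F G : ML lt.
Let u := proj1_sig F.
Let v := proj1_sig G.

Lemma sum_mono : mono L lt (fun t => u t + v t).
Proof. intros s t H. pose proof (ML_mono F s t H). pose proof (ML_mono G s t H). unfold u, v. lra. Qed.

Lemma sum_oc : order_continuous L lt (fun t => u t + v t).
Proof.
  apply (oc_lip L lt HL u v _ 1). lra.
  - intros s t. replace (u s + v s - (u t + v t)) with ((u s - u t) + (v s - v t)) by ring.
    rewrite Rmult_1_l. apply Rabs_triang.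
  - apply ML_oc.
  - apply ML_oc.
Qed.

Lemma exists_sum alpha : 0 <= alpha <= 2 -> exists t, u t + v t = alpha.
Proof.
  intros Ha. destruct (lc_min L lt HL) as [m Hm]. destruct (lc_max L lt HL) as [M HM].
  destruct (ivt L lt HL _ m M alpha sum_mono sum_oc (Hm M)) as [t [Ht _]].
  - pose proof (ML_min F m Hm). pose proof (ML_min G m Hm). unfold u, v in *. lra.
  - pose proof (ML_max F M HM). pose proof (ML_max G M HM). unfold u, v in *. lra.
  - exists t; exact Ht.
Qed.

Lemma sum_lip s t : Rabs (u s - u t) <= Rabs ((u s + v s) - (u t + v t)).
Proof.
  destruct (le_or_lt L lt HL s t) as [H|H].
  - pose proof (ML_mono F s t H). pose proof (ML_mono G s t H). fold u v in H0, H1.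
    unfold Rabs; repeat destruct Rcase_abs; lra.
  - pose proof (ML_mono F t s (or_introl H)). pose proof (ML_mono G t s (or_introl H)). fold u v in H0, H1.
    unfold Rabs; repeat destruct Rcase_abs; lra.
Qed.

Lemma sum_uniq s t : u s + v s = u t + v t -> u s = u t.
Proof. intros H. pose proof (sum_lip s t). rewrite H in H0.
  replace (u t + v t - (u t + v t)) with 0 in H0 by ring. rewrite Rabs_R0 in H0.
  pose proof (Rabs_pos (u s - u t)).
  assert (Rabs (u s - u t) = 0) by lra. unfold Rabs in H2; destruct Rcase_abs in H2; lra. Qed.

Lemma phiA_val alpha t : u t + v t = alpha -> phiA L lt alpha F G = u t.
Proof.
  intros Ht. unfold phiA. apply Rsup_max.
  - exists t. split; auto.
  - intros x [s [Hs ->]]. fold u v in Hs |- *. right. apply sum_uniq. lra.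
Qed.

Lemma dist_ub t : Rabs (u t - v t) <= Defs.dist L lt F G.
Proof.
  unfold Defs.dist. apply Rsup_ub. 2:{ exists t; reflexivity. }
  exists 1. intros x [s ->]. pose proof (ML_range F s). pose proof (ML_range G s).
  unfold Rabs; destruct Rcase_abs; lra.
Qed.

Lemma dist_le c : (forall t, Rabs (u t - v t) <= c) -> Defs.dist L lt F G <= c.
Proof.
  intros H. unfold Defs.dist. apply Rsup_le.
  - destruct (lc_min L lt HL) as [m _]. exists (Rabs (u m - v m)), m. reflexivity.
  - intros x [s ->]. apply H.
Qed.
End FG.
End ML.

Section Core.
Variables (L : Type) (lt : L -> L -> Prop) (HL : LinearContinuumWithEndpoints L lt).
Notation leL := (le L lt).

Lemma core (u v : L -> R) : mono L lt u -> order_continuous L lt u ->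
  mono L lt v -> order_continuous L lt v ->
  (forall x z, (exists t, u t = x /\ v t = z) ->
     exists y, (exists t, u t = x /\ v t = y) /\ (exists t, u t = y /\ v t = z)) ->
  forall a b, (exists t, u t = a /\ v t = b) -> a < b ->
  (exists t, u t = a /\ v t = a) \/ (exists t, u t = b /\ v t = b).
Proof.
  intros Hmu Hcu Hmv Hcv Hcomp a b [tb [Htb1 Htb2]] Hab.
  destruct (fiber_min L lt HL u a Hmu Hcu (ex_intro _ tb Htb1)) as [t0 [Ht0 Hmin]].
  set (y0 := v t0).
  assert (Hy0b : y0 <= b) by (rewrite <- Htb2; apply Hmv; apply Hmin; auto).
  destruct (Rle_or_lt y0 a) as [Hy0a|Hy0a].
  - left. destruct (ivt L lt HL v t0 tb a Hmv Hcv (Hmin tb Htb1)) as [t [Ht [H1 H2]]]. all: try (fold y0; lra).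
    exists t. split; auto.
    pose proof (Hmu _ _ H1). pose proof (Hmu _ _ H2). lra.
  - destruct (Hcomp a y0) as [y [[t1 [Ht1 Ht1']] [t2 [Ht2 Ht2']]]].
    { exists t0; auto. }
    assert (Hyy : y0 <= y) by (rewrite <- Ht1'; apply Hmv; apply Hmin; auto).
    assert (H02 : leL t0 t2).
    { destruct (le_or_lt L lt HL t0 t2) as [H|H]; auto.
      pose proof (Hmu _ _ (or_introl H)). lra. }
    destruct (ivt L lt HL u t0 t2 y0 Hmu Hcu H02) as [t3 [Ht3 [H1 H2]]]. all: try (fold y0; lra).
    assert (Hv3 : v t3 = y0).
    { pose proof (Hmv _ _ H1). pose proof (Hmv _ _ H2). fold y0 in H. lra. }
    destruct (le_or_lt L lt HL t3 tb) as [H|H].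
    + pose proof (Hmu _ _ H). lra.
    + pose proof (Hmv _ _ (or_introl H)). right. exists t3. lra.
Qed.

Lemma core2 (u v : L -> R) : mono L lt u -> order_continuous L lt u ->
  mono L lt v -> order_continuous L lt v ->
  (forall x z, (exists t, u t = x /\ v t = z) ->
     exists y, (exists t, u t = x /\ v t = y) /\ (exists t, u t = y /\ v t = z)) ->
  forall a b, (exists t, u t = a /\ v t = b) ->
  (exists t, u t = a /\ v t = a) \/ (exists t, u t = b /\ v t = b).
Proof.
  intros Hmu Hcu Hmv Hcv Hcomp a b Hab.
  destruct (total_order_T a b) as [[H|H]|H].
  - eapply core; eauto.
  - left. subst. exact Hab.
  - destruct (core v u Hmv Hcv Hmu Hcu) with (a := b) (b := a) as [[t Ht]|[t Ht]].
    + intros x z [t [H1 H2]]. destruct (Hcomp z x) as [y [[t1 Ht1] [t2 Ht2]]].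
      { exists t; auto. }
      exists y. split; [exists t2|exists t1]; tauto.
    + destruct Hab as [t Ht]. exists t; tauto.
    + exact H.
    + right. exists t; tauto.
    + left. exists t; tauto.
Qed.
End Core.

Section Psi.
Variables (L : Type) (lt : L -> L -> Prop) (HL : LinearContinuumWithEndpoints L lt).
Notation leL := (le L lt).
Variables (F G : ML lt) (c : R) (Hc : 0 <= c < 1).
Let u := proj1_sig F.
Let v := proj1_sig G.
Let k := c / (1 - c).
Lemma k_ge0 : 0 <= k.
Proof. unfold k. apply Rmult_le_pos. lra. left; apply Rinv_0_lt_compat; lra. Qed.
Lemma k_id : k * (1 - c) = c.
Proof. unfold k. field. lra. Qed.

Definition hfun (t : L) : R := Rmax 0 (v t - c) + k * Rmax 0 (u t + v t - 1 - c).

Lemma hfun_mono : mono L lt hfun.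
Proof.
  intros s t H. unfold hfun. pose proof (ML_mono L lt F s t H). pose proof (ML_mono L lt G s t H).
  fold u v in H0, H1.
  apply Rplus_le_compat. apply Rmax0_mono; lra.
  apply Rmult_le_compat_l. apply k_ge0. apply Rmax0_mono; lra.
Qed.

Lemma hfun_oc : order_continuous L lt hfun.
Proof.
  apply (oc_lip L lt HL u v _ (1 + k)). pose proof k_ge0; lra.
  - intros s t. unfold hfun.
    replace (Rmax 0 (v s - c) + k * Rmax 0 (u s + v s - 1 - c) -
      (Rmax 0 (v t - c) + k * Rmax 0 (u t + v t - 1 - c))) with
      ((Rmax 0 (v s - c) - Rmax 0 (v t - c)) + k * (Rmax 0 (u s + v s - 1 - c) - Rmax 0 (u t + v t - 1 - c))) by ring.
    eapply Rle_trans. apply Rabs_triang. rewrite Rabs_mult, (Rabs_pos_eq k k_ge0).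
    pose proof (Rmax0_lip (v s - c) (v t - c)).
    pose proof (Rmax0_lip (u s + v s - 1 - c) (u t + v t - 1 - c)).
    replace (v s - c - (v t - c)) with (v s - v t) in H by ring.
    replace (u s + v s - 1 - c - (u t + v t - 1 - c)) with ((u s - u t) + (v s - v t)) in H0 by ring.
    pose proof (Rabs_triang (u s - u t) (v s - v t)).
    pose proof k_ge0. pose proof (Rabs_pos (u s - u t)).
    assert (k * Rabs (Rmax 0 (u s + v s - 1 - c) - Rmax 0 (u t + v t - 1 - c)) <= k * (Rabs (u s - u t) + Rabs (v s - v t))).
    { apply Rmult_le_compat_l; lra. }
    nra.
  - apply ML_oc.
  - apply ML_oc.
Qed.

Lemma hfun_range t : 0 <= hfun t <= 1.
Proof.
  unfold hfun. pose proof (ML_range L lt F t). pose proof (ML_range L lt G t). fold u v in H, H0.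
  pose proof (Rmax0_ge (v t - c)). pose proof (Rmax0_ge (u t + v t - 1 - c)). pose proof k_ge0.
  split. pose proof (Rmult_le_pos _ _ H3 H2). lra.
  assert (Rmax 0 (v t - c) <= 1 - c) by (unfold Rmax; destruct Rle_dec; lra).
  assert (Rmax 0 (u t + v t - 1 - c) <= 1 - c) by (unfold Rmax; destruct Rle_dec; lra).
  assert (k * Rmax 0 (u t + v t - 1 - c) <= k * (1 - c)) by (apply Rmult_le_compat_l; lra).
  rewrite k_id in H6. lra.
Qed.

Lemma hfun_inML : inML L lt hfun.
Proof.
  destruct (lc_min L lt HL) as [m Hm]. destruct (lc_max L lt HL) as [M HM].
  split; [exact hfun_range|]. split; [exact hfun_mono|]. split; [exact hfun_oc|]. split.
  - rewrite (rinf_range L lt hfun m hfun_mono Hm). unfold hfun.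
    pose proof (ML_min L lt F m Hm). pose proof (ML_min L lt G m Hm). fold u v in H, H0.
    rewrite H, H0. rewrite !Rmax0_neg by lra. ring.
  - rewrite (rsup_range L lt hfun M hfun_mono HM). unfold hfun.
    pose proof (ML_max L lt F M HM). pose proof (ML_max L lt G M HM). fold u v in H, H0.
    rewrite H, H0. rewrite !Rmax0_pos by lra.
    replace (1 + 1 - 1 - c) with (1 - c) by ring. rewrite k_id. ring.
Qed.

Definition hML : ML lt := exist _ hfun hfun_inML.

Lemma hML_dist : Defs.dist L lt hML G <= c.
Proof.
  apply (dist_le L lt HL). intros t. simpl. fold v. unfold hfun.
  pose proof (ML_range L lt F t). pose proof (ML_range L lt G t). fold u v in H, H0.
  pose proof k_ge0. pose proof k_id.
  destruct (Rle_or_lt c (v t)) as [H3|H3].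
  - rewrite (Rmax0_pos (v t - c)) by lra.
    assert (Rmax 0 (u t + v t - 1 - c) <= 1 - c) by (unfold Rmax; destruct Rle_dec; lra).
    pose proof (Rmax0_ge (u t + v t - 1 - c)).
    assert (k * Rmax 0 (u t + v t - 1 - c) <= k * (1 - c)) by (apply Rmult_le_compat_l; lra).
    pose proof (Rmult_le_pos _ _ H1 H5).
    unfold Rabs; destruct Rcase_abs; lra.
  - rewrite (Rmax0_neg (v t - c)) by lra. rewrite (Rmax0_neg (u t + v t - 1 - c)) by lra.
    unfold Rabs; destruct Rcase_abs; lra.
Qed.

Lemma psi_val ts : u ts + v ts = 1 + c ->
  Rsup (fun r => exists h : ML lt, r = Rmax 0 (phiA L lt 1 F h - Rmax 0 (Defs.dist L lt h G - c))) = u ts.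
Proof.
  intros Hts. apply Rsup_max.
  - exists hML. rewrite (Rmax0_neg (Defs.dist L lt hML G - c)) by (pose proof hML_dist; lra).
    rewrite (phiA_val L lt HL F hML 1 ts).
    + fold u. rewrite Rmax0_pos. ring. rewrite Rminus_0_r. apply ML_range.
    + simpl. unfold hfun. fold u v.
      pose proof (ML_range L lt F ts). fold u in H.
      rewrite (Rmax0_pos (v ts - c)) by lra. rewrite (Rmax0_neg (u ts + v ts - 1 - c)) by lra. lra.
  - intros x [h ->]. set (w := proj1_sig h).
    destruct (exists_sum L lt HL F h 1) as [s Hs]. lra.
    rewrite (phiA_val L lt HL F h 1 s Hs). fold u w in Hs |- *.
    pose proof (dist_ub L lt h G s). fold w v in H.
    set (D := Defs.dist L lt h G) in *.
    assert (0 <= u ts) by apply ML_range.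
    apply Rmax_lub; auto.
    pose proof (Rmax0_ge (D - c)).
    destruct (le_or_lt L lt HL s ts) as [Hst|Hst].
    + pose proof (ML_mono L lt F s ts Hst). fold u in H2. lra.
    + pose proof (ML_mono L lt F ts s (or_introl Hst)). pose proof (ML_mono L lt G ts s (or_introl Hst)).
      fold u v in H2, H3.
      assert (v s - w s <= D) by (unfold Rabs in H; destruct Rcase_abs in H; lra).
      assert (D - c <= Rmax 0 (D - c)) by (unfold Rmax; destruct Rle_dec; lra).
      lra.
Qed.
End Psi.

Lemma Q2R1 : Q2R 1 = 1. Proof. unfold Q2R; simpl. field. Qed.
Lemma Q2R0 : Q2R 0 = 0. Proof. unfold Q2R; simpl. field. Qed.

Lemma ratapprox x eps : 0 <= x <= 1 -> 0 < eps ->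
  exists r : Q, (0 <= r /\ r <= 1)%Q /\ 0 < Q2R r /\ Rabs (Q2R r - x) < eps.
Proof.
  intros Hx He.
  set (e := Rmin eps 1).
  assert (He1 : 0 < e /\ e <= 1 /\ e <= eps) by (unfold e, Rmin; destruct Rle_dec; lra).
  destruct (archimed (2 / e)) as [Hup _].
  assert (H2e : 2 <= 2 / e).
  { unfold Rdiv. apply Rle_trans with (2 * 1). lra. apply Rmult_le_compat_l. lra.
    rewrite <- Rinv_1. apply Rinv_le_contravar; lra. }
  assert (Hne : 2 / e * e = 2) by (field; lra).
  destruct (up (2 / e)) as [|p|p] eqn:EN.
  - simpl in Hup. lra.
  - set (n := IZR (Zpos p)) in *.
    assert (Hn : 0 < n) by lra.
    assert (Hne2 : 2 < n * e) by nra.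
    destruct (archimed (x * n)) as [Hk1 Hk2].
    set (k := up (x * n)) in *.
    destruct (Rle_or_lt x (1/2)) as [Hx2|Hx2].
    + exists (k # p).
      assert (Hq : Q2R (k # p) * n = IZR k) by (unfold Q2R; simpl; fold n; field; lra).
      set (q := Q2R (k # p)) in *.
      assert (Hq1 : x < q) by nra.
      assert (Hq2 : q <= x + 1 / n).
      { assert (q * n <= x * n + 1) by lra. apply Rmult_le_reg_r with n; auto.
        replace ((x + 1/n) * n) with (x * n + 1) by (field; lra). lra. }
      assert (Hn2 : 1 / n < e / 2).
      { apply Rmult_lt_reg_r with n; auto. replace (1 / n * n) with 1 by (field; lra). nra. }
      split; [|split].
      * split; apply Rle_Qle; rewrite ?Q2R0, ?Q2R1; fold q; lra.
      * lra.
      * unfold Rabs; destruct Rcase_abs; lra.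
    + exists ((k - 1) # p).
      assert (Hq : Q2R ((k - 1) # p) * n = IZR k - 1).
      { unfold Q2R; simpl; fold n. rewrite minus_IZR. simpl. field; lra. }
      set (q := Q2R ((k - 1) # p)) in *.
      assert (Hq1 : q <= x) by nra.
      assert (Hq2 : x - 1 / n < q).
      { apply Rmult_lt_reg_r with n; auto.
        replace ((x - 1/n) * n) with (x * n - 1) by (field; lra). lra. }
      assert (Hn2 : 1 / n < e / 2).
      { apply Rmult_lt_reg_r with n; auto. replace (1 / n * n) with 1 by (field; lra). nra. }
      split; [|split].
      * split; apply Rle_Qle; rewrite ?Q2R0, ?Q2R1; fold q; lra.
      * lra.
      * unfold Rabs; destruct Rcase_abs; lra.
  - pose proof (IZR_lt (Zneg p) 0 (Pos2Z.neg_is_neg p)). lra.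
Qed.

Lemma H1Q : (0 <= 1 /\ 1 <= 1)%Q.
Proof. split; unfold Qle; simpl; lia. Qed.

Definition Psi (K : formula) : formula :=
  FSup 2 (FMinus (FPhi 1 H1Q 0 2) (FMinus (FDist 2 1) K)).

Section Fm.
Variables (L : Type) (lt : L -> L -> Prop) (HL : LinearContinuumWithEndpoints L lt).

Definition Good (psi : formula) (beta : R) : Prop :=
  fv_below 2%nat psi /\
  forall (e : nat -> ML lt) t, proj1_sig (e 0%nat) t + proj1_sig (e 1%nat) t = beta ->
     eval L lt e psi = proj1_sig (e 0%nat) t.

Lemma Q2R_bounds r : (0 <= r /\ r <= 1)%Q -> 0 <= Q2R r <= 1.
Proof. intros [H1 H2]. apply Qle_Rle in H1, H2. rewrite Q2R0 in H1. rewrite Q2R1 in H2. lra. Qed.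

Lemma eval_K r (Hr : (0 <= r /\ r <= 1)%Q) e : eval L lt e (FPhi r Hr 0 0) = Q2R r / 2.
Proof.
  simpl. pose proof (Q2R_bounds r Hr).
  destruct (exists_sum L lt HL (e 0%nat) (e 0%nat) (Q2R r)) as [t Ht]. lra.
  rewrite (phiA_val L lt HL _ _ _ t Ht). lra.
Qed.

Lemma good_phi r (Hr : (0 <= r /\ r <= 1)%Q) : Good (FPhi r Hr 0 1) (Q2R r).
Proof.
  split.
  - intros k Hk. simpl in Hk. lia.
  - intros e t Ht. simpl. apply (phiA_val L lt HL _ _ _ t Ht).
Qed.

Lemma good_psi K c : (forall e, eval L lt e K = c) -> (forall k, free_in k K -> (k < 2)%nat) ->
  0 <= c < 1 -> Good (Psi K) (1 + c).
Proof.
  intros HK HfK Hc. split.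
  - intros k Hk. simpl in Hk. destruct Hk as [Hk1 [[Hk|Hk]|[[Hk|Hk]|Hk]]]; try lia. auto.
  - intros e t Ht. unfold Psi. cbn [eval].
    rewrite <- (psi_val L lt HL (e 0%nat) (e 1%nat) c Hc t Ht).
    f_equal. apply functional_extensionality; intros r. apply propositional_extensionality.
    split; intros [g Hg]; exists g; rewrite Hg; rewrite HK, Q2R1; reflexivity.
Qed.

Lemma dense_good beta eps : 0 <= beta <= 2 -> 0 < eps ->
  exists beta', 0 <= beta' <= 2 /\ Rabs (beta' - beta) < eps /\ exists psi, Good psi beta'.
Proof.
  intros Hb He.
  destruct (Rle_or_lt beta 1) as [H1|H1].
  - destruct (ratapprox beta eps) as [r [Hr [Hr0 Hr1]]]; try lra.
    exists (Q2R r). pose proof (Q2R_bounds r Hr). split; [lra|]. split; auto.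
    exists (FPhi r Hr 0 1). apply good_phi.
  - destruct (Rle_or_lt beta (3/2)) as [H2|H2].
    + destruct (ratapprox (2 * (beta - 1)) eps) as [r [Hr [Hr0 Hr1]]]; try lra.
      pose proof (Q2R_bounds r Hr).
      exists (1 + Q2R r / 2). split; [lra|]. split.
      { replace (1 + Q2R r / 2 - beta) with ((Q2R r - 2 * (beta - 1)) / 2) by field.
        unfold Rdiv. rewrite Rabs_mult. rewrite (Rabs_pos_eq (/2)) by lra. lra. }
      exists (Psi (FPhi r Hr 0 0)). apply good_psi.
      * apply eval_K.
      * intros k Hk; simpl in Hk; lia.
      * lra.
    + destruct (ratapprox (2 * (2 - beta)) eps) as [r [Hr [Hr0 Hr1]]]; try lra.
      pose proof (Q2R_bounds r Hr).
      exists (1 + (1 - Q2R r / 2)). split; [lra|]. split.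
      { replace (1 + (1 - Q2R r / 2) - beta) with (- (Q2R r - 2 * (2 - beta)) / 2) by field.
        unfold Rdiv. rewrite Rabs_mult, Rabs_Ropp. rewrite (Rabs_pos_eq (/2)) by lra. lra. }
      exists (Psi (FNeg (FPhi r Hr 0 0))). apply good_psi.
      * intros e. cbn [eval]. rewrite <- (eval_K r Hr e). reflexivity.
      * intros k Hk; simpl in Hk; lia.
      * lra.
Qed.

Section Seq.
Variables (I : Type) (ltI : I -> I -> Prop) (f : I -> ML lt) (Hind : indiscernible L lt ltI f).

Definition pf (p q : I) (k : nat) : I := match k with 0%nat => p | _ => q end.

Lemma pf_inc p q : ltI p q -> increasing_on ltI 2%nat (pf p q).
Proof. intros H a b Hab Hb. destruct a as [|a]; destruct b as [|b]; simpl; try lia. auto. Qed.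

Lemma agree p q p' q' psi beta : ltI p q -> ltI p' q' -> Good psi beta ->
  forall s s', proj1_sig (f p) s + proj1_sig (f q) s = beta ->
    proj1_sig (f p') s' + proj1_sig (f q') s' = beta ->
    proj1_sig (f p) s = proj1_sig (f p') s'.
Proof.
  intros Hpq Hpq' [Hfv Hg] s s' Hs Hs'.
  pose proof (Hind psi 2%nat Hfv (pf p q) (pf p' q') (pf_inc p q Hpq) (pf_inc p' q' Hpq')) as E.
  rewrite (Hg (fun k => f (pf p q k)) s Hs) in E.
  rewrite (Hg (fun k => f (pf p' q' k)) s' Hs') in E.
  exact E.
Qed.

Lemma transfer p q p' q' : ltI p q -> ltI p' q' ->
  forall x y, im L lt (f p) (f q) (x, y) -> im L lt (f p') (f q') (x, y).
Proof.
  intros Hpq Hpq' x y [t [Hx Hy]]. simpl in Hx, Hy.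
  set (u := proj1_sig (f p)) in *. set (v := proj1_sig (f q)) in *.
  set (u' := proj1_sig (f p')). set (v' := proj1_sig (f q')).
  assert (Hb : 0 <= x + y <= 2).
  { pose proof (ML_range L lt (f p) t). pose proof (ML_range L lt (f q) t). fold u v in H, H0. lra. }
  destruct (exists_sum L lt HL (f p') (f q') (x + y) Hb) as [t' Ht'].
  fold u' v' in Ht'.
  assert (Heq : u' t' = x).
  { destruct (Req_dec (u' t') x) as [E|E]; auto. exfalso.
    assert (Hd : 0 < Rabs (u' t' - x)) by (apply Rabs_pos_lt; lra).
    set (d := Rabs (u' t' - x)) in *.
    destruct (dense_good (x + y) (d / 2) Hb) as [b' [Hb' [Hbb [psi Hpsi]]]]. lra.
    destruct (exists_sum L lt HL (f p) (f q) b' Hb') as [s Hs].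
    destruct (exists_sum L lt HL (f p') (f q') b' Hb') as [s' Hs'].
    pose proof (agree p q p' q' psi b' Hpq Hpq' Hpsi s s' Hs Hs') as A.
    pose proof (sum_lip L lt HL (f p) (f q) s t) as L1.
    pose proof (sum_lip L lt HL (f p') (f q') s' t') as L2.
    fold u v u' v' in Hs, Hs', A, L1, L2.
    unfold d in *.
    unfold Rabs in *; repeat destruct Rcase_abs; lra. }
  exists t'. simpl. fold u' v'. split; lra.
Qed.
End Seq.
End Fm.

Theorem mainTheorem19
  (L : Type) (lt : L -> L -> Prop) (HL : LinearContinuumWithEndpoints L lt)
  (I : Type) (ltI : I -> I -> Prop) (HI : StrictLinearOrder I ltI)
  (H3 : exists x y z : I, ltI x y /\ ltI y z)
  (f : I -> ML lt) (Hind : indiscernible L lt ltI f)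
  (i j : I) (Hij : ltI i j) (a b : R) (Hab : im L lt (f i) (f j) (a, b)) :
  im L lt (f i) (f j) (a, a) \/ im L lt (f i) (f j) (b, b).
Proof.
  destruct H3 as [p [q [r [Hpq Hqr]]]].
  assert (Hpr : ltI p r) by (eapply (slo_trans _ _ HI); eauto).
  apply (core2 L lt HL (proj1_sig (f i)) (proj1_sig (f j))).
  - apply ML_mono.
  - apply ML_oc.
  - apply ML_mono.
  - apply ML_oc.
  - intros x z Hxz.
    assert (H1 : im L lt (f p) (f r) (x, z)) by (apply (transfer L lt HL I ltI f Hind i j p r Hij Hpr); exact Hxz).
    destruct H1 as [t [Ht1 Ht2]]. simpl in Ht1, Ht2.
    exists (proj1_sig (f q) t). split.
    + apply (transfer L lt HL I ltI f Hind p q i j Hpq Hij). exists t; simpl; auto.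
    + apply (transfer L lt HL I ltI f Hind q r i j Hqr Hij). exists t; simpl; auto.
  - exact Hab.
Qed.
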